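(* Let $\mathcal{H}$ be a complex Hilbert space and $B,C\in\mathcal{B}(\mathcal{H})$. Then $$w^2\left(\begin{bmatrix}0 & B\\ C & 0\end{bmatrix}\right)\ge \frac{1}{4\sqrt2}\Big[\|B+C^*\|^4+\|B-C^*\|^4\Big]^{1/2}\ge \frac14\max\left\{\big\||B|^2+|C^*|^2\big\|,\ \big\||B^*|^2+|C|^2\big\|\right\}.$$
   Context: $\mathcal{B}(\mathcal{H})$ is the algebra of bounded linear operators on $\mathcal{H}$ with operator norm $\|\cdot\|$. For $A\in\mathcal{B}(\mathcal{H})$, $A^*$ is the adjoint, $|A|=(A^*A)^{1/2}$, $|A^*|=(AA^* )^{1/2}$, and $w(A)=\sup_{\|x\|=1}|\langle Ax,x\rangle|$ is the numerical radius. The operator matrix $\begin{bmatrix}A&B\\C&D\end{bmatrix}$ acts on $\mathcal{H}\oplus\mathcal{H}$ by $(x_1,x_2)\mapsto(Ax_1+Bx_2,\,Cx_1+Dx_2)$; $0$ denotes the zero operator. *)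

(* Defs.v *)
From HB Require Import structures.
From mathcomp Require Import all_boot all_order all_algebra.
From mathcomp Require Import boolp classical_sets reals.
From mathcomp Require Import complex.
Set Implicit Arguments. Unset Strict Implicit. Unset Printing Implicit Defensive.
Import Order.TTheory GRing.Theory Num.Theory.
Local Open Scope ring_scope.
Local Open Scope classical_set_scope.
Local Open Scope complex_scope.

Section Hilbert.
Variable R : realType.

Definition is_inner_product (H : lmodType R[i]) (ip : H -> H -> R[i]) : Prop :=
  [/\ (forall (a : R[i]) (x y z : H), ip (a *: x + y) z = a * ip x z + ip y z),
      (forall x y : H, ip y x = (ip x y)^*),
      (forall x : H, 0 <= ip x x) &
      (forall x : H, ip x x = 0 -> x = 0)].

Definition ipnorm (V : Type) (ip : V -> V -> R[i]) (x : V) : R :=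
  Num.sqrt (complex.Re (ip x x)).

Definition ip_complete (H : lmodType R[i]) (ip : H -> H -> R[i]) : Prop :=
  forall u : nat -> H,
    (forall e : R, 0 < e -> exists N : nat, forall m n : nat,
        (N <= m)%N -> (N <= n)%N -> ipnorm ip (u m - u n) < e) ->
    exists l : H, forall e : R, 0 < e -> exists N : nat, forall n : nat,
        (N <= n)%N -> ipnorm ip (u n - l) < e.

Definition is_Hilbert (H : lmodType R[i]) (ip : H -> H -> R[i]) : Prop :=
  is_inner_product ip /\ ip_complete ip.

Definition is_bounded_linear (H : lmodType R[i]) (ip : H -> H -> R[i])
    (A : H -> H) : Prop :=
  (forall (a : R[i]) (x y : H), A (a *: x + y) = a *: A x + A y) /\
  exists M : R, forall x : H, ipnorm ip (A x) <= M * ipnorm ip x.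

Definition is_adjoint (H : lmodType R[i]) (ip : H -> H -> R[i])
    (A As : H -> H) : Prop :=
  forall x y : H, ip (A x) y = ip x (As y).

Definition opnorm (V : Type) (ip : V -> V -> R[i]) (A : V -> V) : R :=
  sup [set r : R | exists x : V, ipnorm ip x = 1 /\ r = ipnorm ip (A x)].

Definition numrad (V : Type) (ip : V -> V -> R[i]) (A : V -> V) : R :=
  sup [set r : R | exists x : V, ipnorm ip x = 1 /\
                   r = complex.Re `|ip (A x) x|].

Definition prod_ip (V : Type) (ip : V -> V -> R[i]) (p q : V * V) : R[i] :=
  ip p.1 q.1 + ip p.2 q.2.

Definition opmatrix (V : lmodType R[i]) (A B C D : V -> V) (p : V * V) : V * V :=
  (A p.1 + B p.2, C p.1 + D p.2).

End Hilbert.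

(* Submission.v *)
From Pilot Require Import Defs.
From HB Require Import structures.
From mathcomp Require Import all_boot all_order all_algebra.
From mathcomp Require Import boolp classical_sets reals.
From mathcomp Require Import complex.
From mathcomp Require Import ring lra.
Set Implicit Arguments. Unset Strict Implicit.
Import Order.TTheory GRing.Theory Num.Theory.
Local Open Scope ring_scope.
Local Open Scope classical_set_scope.
Local Open Scope complex_scope.
Section T.
Variable R : realType.
Lemma ReMC (r : R) (z : R[i]) : complex.Re (r%:C * z) = r * complex.Re z.
Proof. by case: z => a b; simpc. Qed.
Lemma ImMC (r : R) (z : R[i]) : complex.Im (r%:C * z) = r * complex.Im z.
Proof. by case: z => a b; simpc. Qed.
Lemma ReJ (z : R[i]) : complex.Re (Num.conj z) = complex.Re z.
Proof. by case: z. Qed.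
Lemma ImiM (z : R[i]) : complex.Im ('i * z) = complex.Re z.
Proof. by case: z => a b; simpc. Qed.
Lemma ImJiM (z : R[i]) : complex.Im (Num.conj 'i * z) = - complex.Re z.
Proof. by case: z => a b; simpc. Qed.
Lemma iJi : ('i : R[i]) * Num.conj 'i = 1.
Proof. by simpc. Qed.
Lemma ReNorm (z : R[i]) : complex.Re `|z| = Num.sqrt (complex.Re z ^+ 2 + complex.Im z ^+ 2).
Proof. by rewrite normc_def. Qed.
Lemma normcRI (z : R[i]) : Normc.normc z = Num.sqrt (complex.Re z ^+ 2 + complex.Im z ^+ 2).
Proof. by case: z. Qed.
Lemma ReD (z w : R[i]) : complex.Re (z + w) = complex.Re z + complex.Re w.
Proof. by case: z; case: w. Qed.
Lemma ImD (z w : R[i]) : complex.Im (z + w) = complex.Im z + complex.Im w.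
Proof. by case: z; case: w. Qed.
Lemma conjD (z w : R[i]) : Num.conj (z + w) = Num.conj z + Num.conj w.
Proof. change ((z + w)^* = z^* + w^*); by case: z => a b; case: w => c d; simpc. Qed.
Lemma conjM (z w : R[i]) : Num.conj (z * w) = Num.conj z * Num.conj w.
Proof. change ((z * w)^* = z^* * w^*); by case: z => a b; case: w => c d; simpc. Qed.
Lemma conjRC (r : R) : Num.conj (r%:C) = r%:C.
Proof. change ((r%:C)^* = r%:C); exact: conjc_real. Qed.
Lemma conjC (r : R) : (r%:C)^* = r%:C.
Proof. exact: conjc_real. Qed.
Lemma ge0_real (z : R[i]) : 0 <= z -> z = (complex.Re z)%:C /\ 0 <= complex.Re z.
Proof. rewrite lecE => /andP[/eqP h1 h2]; split=> //; by case: z h1 h2 => a b /= ->. Qed.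
Variables (H : lmodType R[i]) (ip : H -> H -> R[i]).
Hypothesis hip : is_inner_product ip.
Let hip' : [/\ (forall (a : R[i]) (x y z : H), ip (a *: x + y) z = a * ip x z + ip y z),
      (forall x y : H, ip y x = (ip x y)^*),
      (forall x : H, 0 <= ip x x) &
      (forall x : H, ip x x = 0 -> x = 0)] := hip.

Lemma ipDl x y z : ip (x + y) z = ip x z + ip y z.
Proof. case: hip' => h _ _ _. have := h 1 x y z. rewrite scale1r mul1r. done. Qed.
Lemma ip0l z : ip 0 z = 0.
Proof. by apply: (addIr (ip 0 z)); rewrite -ipDl !add0r. Qed.
Lemma ipZl a x z : ip (a *: x) z = a * ip x z.
Proof. by case: hip' => h _ _ _; rewrite -[a *: x]addr0 h ip0l addr0. Qed.
Lemma ipJ x y : ip y x = Num.conj (ip x y).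
Proof. by case: hip'. Qed.
Lemma ipDr x y z : ip z (x + y) = ip z x + ip z y.
Proof. by rewrite (ipJ x z) (ipJ y z) (ipJ (x+y) z) ipDl conjD. Qed.
Lemma ipZr a x z : ip z (a *: x) = Num.conj a * ip z x.
Proof. by rewrite (ipJ x z) (ipJ (a *: x) z) ipZl conjM. Qed.
Lemma ipNl x z : ip (- x) z = - ip x z.
Proof. by rewrite -scaleN1r ipZl mulN1r. Qed.
Lemma ipNr x z : ip z (- x) = - ip z x.
Proof. by rewrite -scaleN1r ipZr; case: (ip z x) => a b; simpc. Qed.

Definition rp x y := complex.Re (ip x y).
Lemma rpDl x y z : rp (x + y) z = rp x z + rp y z.
Proof. by rewrite /rp ipDl ReD. Qed.
Lemma rpDr x y z : rp z (x + y) = rp z x + rp z y.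
Proof. by rewrite /rp ipDr ReD. Qed.
Lemma rpNl x z : rp (- x) z = - rp x z.
Proof. by rewrite /rp ipNl; case: (ip x z). Qed.
Lemma rpNr x z : rp z (- x) = - rp z x.
Proof. by rewrite /rp ipNr; case: (ip z x). Qed.
Lemma rpC x y : rp y x = rp x y.
Proof. by rewrite /rp ipJ ReJ. Qed.
Lemma rpZl (r : R) x z : rp (r%:C *: x) z = r * rp x z.
Proof. by rewrite /rp ipZl ReMC. Qed.
Lemma rpZr (r : R) x z : rp z (r%:C *: x) = r * rp z x.
Proof. by rewrite /rp ipZr conjRC ReMC. Qed.
Lemma ipxx x : ip x x = (rp x x)%:C /\ 0 <= rp x x.
Proof. by apply: ge0_real; case: hip'. Qed.
Lemma rp_ge0 x : 0 <= rp x x. Proof. by case: (ipxx x). Qed.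
Lemma rp_eq0 {x} : rp x x = 0 -> x = 0.
Proof. by case: hip' => _ _ _ h e; apply: h; case: (ipxx x) => -> _; rewrite e. Qed.
Lemma rp0l z : rp 0 z = 0. Proof. by rewrite /rp ip0l. Qed.
Lemma rp0r z : rp z 0 = 0. Proof. by rewrite rpC rp0l. Qed.

Local Notation n := (ipnorm ip).
Lemma nE x : n x = Num.sqrt (rp x x). Proof. by []. Qed.
Lemma n_ge0 x : 0 <= n x. Proof. exact: sqrtr_ge0. Qed.
Lemma n_sqr x : n x ^+ 2 = rp x x. Proof. by rewrite nE sqr_sqrtr // rp_ge0. Qed.
Lemma n_eq0 {x} : n x = 0 -> x = 0.
Proof. by move=> h; apply: rp_eq0; rewrite -n_sqr h expr0n. Qed.
Lemma n0 : n 0 = 0. Proof. by rewrite nE rp0l sqrtr0. Qed.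
Lemma nZ (r : R) x : n (r%:C *: x) = `|r| * n x.
Proof. by rewrite nE rpZl rpZr mulrA -expr2 sqrtrM ?sqrtr_sqr // sqr_ge0. Qed.
Lemma rpi x : rp ('i *: x) ('i *: x) = rp x x.
Proof. by rewrite /rp ipZl ipZr mulrA iJi mul1r. Qed.
Lemma ni x : n ('i *: x) = n x.
Proof. by rewrite !nE rpi. Qed.

Lemma expand x y : rp (x - y) (x - y) = rp x x + rp y y - 2 * rp x y.
Proof. rewrite rpDl !rpDr !rpNl !rpNr (rpC y x); ring. Qed.

Lemma CS x y : rp x y <= n x * n y.
Proof.
have [hx|hx] := eqVneq (n x) 0.
  by rewrite (n_eq0 hx) rp0l n0 mul0r.
have [hy|hy] := eqVneq (n y) 0.
  by rewrite (n_eq0 hy) rp0r n0 mulr0.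
have px : 0 < n x by rewrite lt_def hx n_ge0.
have py : 0 < n y by rewrite lt_def hy n_ge0.
have := rp_ge0 ((n y)%:C *: x - (n x)%:C *: y).
rewrite expand !rpZl !rpZr -!n_sqr => h.
have h2 : 0 <= 2 * (n x * n y) * (n x * n y - rp x y) by lra.
rewrite -subr_ge0; move: h2; rewrite pmulr_rge0 //.
by rewrite mulr_gt0 // mulr_gt0.
Qed.

Lemma n_triangle x y : n (x + y) <= n x + n y.
Proof.
rewrite nE -[n x + n y]ger0_norm ?addr_ge0 ?n_ge0 // -sqrtr_sqr.
rewrite ler_sqrt; last by rewrite sqr_ge0.
rewrite rpDl !rpDr (rpC x y) sqrrD !n_sqr mulr2n.
have := CS x y; lra.
Qed.
Lemma ReJiM (z : R[i]) : complex.Re (Num.conj 'i * z) = complex.Im z.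
Proof. by case: z => a b; simpc. Qed.
Lemma ReiM (z : R[i]) : complex.Re ('i * z) = - complex.Im z.
Proof. by case: z => a b; simpc. Qed.

Lemma rp_abs x y : `|rp x y| <= n x * n y.
Proof.
rewrite ler_norml CS andbT.
have := CS (- x) y; rewrite rpNl.
have -> : n (- x) = n x by rewrite !nE rpNl rpNr opprK.
lra.
Qed.
Lemma Im_abs x y : `|complex.Im (ip x y)| <= n x * n y.
Proof.
have := rp_abs x ('i *: y); rewrite ni /rp ipZr ReJiM //.
Qed.

Lemma sqrt_sum_le (a b : R) : Num.sqrt (a ^+ 2 + b ^+ 2) <= `|a| + `|b|.
Proof.
rewrite -[`|a| + `|b|]ger0_norm ?addr_ge0 // -sqrtr_sqr ler_sqrt ?sqr_ge0 //.
rewrite sqrrD mulr2n.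
have h1 : a ^+ 2 = `|a| ^+ 2 by rewrite -normrX ger0_norm ?sqr_ge0.
have h2 : b ^+ 2 = `|b| ^+ 2 by rewrite -normrX ger0_norm ?sqr_ge0.
have : 0 <= `|a| * `|b| by rewrite mulr_ge0.
lra.
Qed.
Lemma sqrt_sum_geRe (a b : R) : a <= Num.sqrt (a ^+ 2 + b ^+ 2).
Proof.
apply: (le_trans (ler_norm a)); rewrite -sqrtr_sqr ler_sqrt ?sqr_ge0 //.
have := sqr_ge0 b; have := sqr_ge0 a; lra.
by rewrite addr_ge0 ?sqr_ge0.
Qed.
Lemma sqrt_sum_geIm (a b : R) : b <= Num.sqrt (a ^+ 2 + b ^+ 2).
Proof. by rewrite addrC sqrt_sum_geRe. Qed.

Lemma sup_ge0' (E : set R) : (forall r, E r -> 0 <= r) -> has_ubound E -> 0 <= sup E.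
Proof.
move=> h hub; have [[e Ee]|ne] := pselect (exists e, E e).
  exact: le_trans (h e Ee) (ub_le_sup hub Ee).
rewrite (_ : E = set0) ?sup0 //; apply/seteqP; split => x //= Ex.
by exfalso; apply: ne; exists x.
Qed.
Lemma sup_le' (E : set R) K : 0 <= K -> (forall r, E r -> r <= K) -> sup E <= K.
Proof.
move=> hK h; have [[e Ee]|ne] := pselect (exists e, E e).
  by apply: ge_sup; [exists e | move=> r /h].
rewrite (_ : E = set0) ?sup0 //; apply/seteqP; split => x //= Ex.
by exfalso; apply: ne; exists x.
Qed.

Definition lin (A : H -> H) := forall (a : R[i]) (x y : H), A (a *: x + y) = a *: A x + A y.
Definition bnd (A : H -> H) (M : R) := forall x, n (A x) <= M * n x.

Lemma A0 A : lin A -> A 0 = 0.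
Proof.
move=> hA; have := hA 1 0 0; rewrite !scale1r addr0 => h.
by apply: (addIr (A 0)); rewrite -h add0r.
Qed.
Lemma AZ A a x : lin A -> A (a *: x) = a *: A x.
Proof. by move=> hA; rewrite -[a *: x]addr0 hA A0 // addr0. Qed.
Lemma AD A x y : lin A -> A (x + y) = A x + A y.
Proof. by move=> hA; rewrite -[x]scale1r hA !scale1r. Qed.
Lemma nN x : n (- x) = n x.
Proof. by rewrite !nE rpNl rpNr opprK. Qed.

Lemma bnd_abs A M : bnd A M -> bnd A `|M|.
Proof. move=> h x; apply: (le_trans (h x)); apply: ler_wpM2r; [exact: n_ge0|exact: ler_norm]. Qed.
Lemma bndD A A' M M' : bnd A M -> bnd A' M' -> bnd (fun x => A x + A' x) (M + M').
Proof.
move=> h h' x; apply: (le_trans (n_triangle _ _)); rewrite mulrDl.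
exact: lerD.
Qed.
Lemma bndB A A' M M' : bnd A M -> bnd A' M' -> bnd (fun x => A x - A' x) (M + M').
Proof.
move=> h h' x; apply: (le_trans (n_triangle _ _)); rewrite mulrDl nN.
exact: lerD.
Qed.

Definition S (A : H -> H) := [set r : R | exists x : H, n x = 1 /\ r = n (A x)].
Lemma S_ub A M : bnd A M -> has_ubound (S A).
Proof. by move=> h; exists M => r [x [hx ->]]; have := h x; rewrite hx mulr1. Qed.
Lemma op_ge0 A M : bnd A M -> 0 <= opnorm ip A.
Proof. move=> h; change (0 <= sup (S A)); apply: (sup_ge0' _ (S_ub h)) => r [x [_ ->]]; exact: n_ge0. Qed.
Lemma op_unit A M x : bnd A M -> n x = 1 -> n (A x) <= opnorm ip A.
Proof. by move=> h hx; change (n (A x) <= sup (S A)); apply: (ub_le_sup (S_ub h)); exists x. Qed.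
Lemma op_le A K : 0 <= K -> (forall x, n x = 1 -> n (A x) <= K) -> opnorm ip A <= K.
Proof. by move=> hK h; change (sup (S A) <= K); apply: sup_le' => // r [x [hx ->]]; apply: h. Qed.
Lemma op_bound A M w : lin A -> bnd A M -> n (A w) <= opnorm ip A * n w.
Proof.
move=> hl hb; have [hw|hw] := eqVneq (n w) 0.
  by rewrite (n_eq0 hw) A0 // n0 mulr0.
have pw : 0 < n w by rewrite lt_def hw n_ge0.
have hx : n ((n w)^-1%:C *: w) = 1.
  by rewrite nZ ger0_norm ?invr_ge0 ?n_ge0 // mulVf.
have := op_unit hb hx; rewrite AZ // nZ ger0_norm ?invr_ge0 ?n_ge0 //.
by rewrite ler_pdivrMl // mulrC.
Qed.

Lemma adj_norm X X' M : lin X -> bnd X M ->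
  (forall z y, rp (X z) y = rp z (X' y)) -> forall u, n (X' u) <= opnorm ip X * n u.
Proof.
move=> hl hb hadj u; set t := n (X' u).
have ht : t ^+ 2 <= opnorm ip X * t * n u.
  rewrite /t n_sqr -hadj; apply: (le_trans (CS _ _)).
  apply: ler_wpM2r; first exact: n_ge0.
  exact: op_bound.
have t0 : 0 <= t := n_ge0 _.
have a0 : 0 <= opnorm ip X := op_ge0 hb.
have u0 : 0 <= n u := n_ge0 _.
have [->|tn0] := eqVneq t 0; first by rewrite mulr_ge0.
have tp : 0 < t by rewrite lt_def tn0.
by rewrite -(ler_pM2r tp) -expr2 mulrAC.
Qed.
Lemma pick y K : 0 <= K -> (forall u, n u = 1 -> rp y u <= K) -> n y <= K.
Proof.
move=> hK h; have [->|hy] := eqVneq (n y) 0; first done.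
have py : 0 < n y by rewrite lt_def hy n_ge0.
have hu : n ((n y)^-1%:C *: y) = 1.
  by rewrite nZ ger0_norm ?invr_ge0 ?n_ge0 // mulVf.
have := h _ hu; rewrite rpZr -n_sqr expr2 mulrA mulVf // mul1r //.
Qed.

Definition ipi x y := complex.Im (ip x y).
Lemma ipiZl (r : R) x z : ipi (r%:C *: x) z = r * ipi x z.
Proof. by rewrite /ipi ipZl ImMC. Qed.
Lemma ipiZr (r : R) x z : ipi z (r%:C *: x) = r * ipi z x.
Proof. by rewrite /ipi ipZr conjRC ImMC. Qed.
Lemma ipi_il x z : ipi ('i *: x) z = rp x z.
Proof. by rewrite /ipi ipZl ImiM. Qed.
Lemma ipi_ir x z : ipi z ('i *: x) = - rp z x.
Proof. by rewrite /ipi ipZr ImJiM. Qed.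
Lemma ReDip a b c d : complex.Re (ip a b + ip c d) = rp a b + rp c d.
Proof. exact: ReD. Qed.
Lemma ImDip a b c d : complex.Im (ip a b + ip c d) = ipi a b + ipi c d.
Proof. exact: ImD. Qed.

Lemma n_le1 x : rp x x <= 1 -> n x <= 1.
Proof. by move=> h; rewrite nE -sqrtr1 ler_sqrt. Qed.

Section Ops.
Variables (B C Bs Cs : H -> H) (MB MC : R).
Hypotheses (lB : lin B) (lC : lin C) (bB : bnd B MB) (bC : bnd C MC).
Hypotheses (aB : forall x y, rp (B x) y = rp x (Bs y)) (aC : forall x y, rp (C x) y = rp x (Cs y)).

Let T := opmatrix (fun _ : H => 0) B C (fun _ : H => 0).
Definition W := [set r : R | exists p : H * H, ipnorm (prod_ip ip) p = 1 /\
                   r = complex.Re `|prod_ip ip (T p) p|].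

Lemma pnorm1 (p : H * H) : ipnorm (prod_ip ip) p = 1 -> rp p.1 p.1 + rp p.2 p.2 = 1.
Proof.
rewrite /ipnorm /prod_ip -/(rp _ _) ReDip => h.
have h0 : 0 <= rp p.1 p.1 + rp p.2 p.2 by rewrite addr_ge0 ?rp_ge0.
by rewrite -(sqr_sqrtr h0) h expr1n.
Qed.

Lemma W_ub : has_ubound W.
Proof.
exists (2 * (`|MB| + `|MC|)) => r [p [hp ->]].
have h1 := pnorm1 hp.
have n1 : n p.1 <= 1 by apply: n_le1; have := rp_ge0 p.2; lra.
have n2 : n p.2 <= 1 by apply: n_le1; have := rp_ge0 p.1; lra.
rewrite /T /opmatrix /prod_ip /= add0r addr0 normcRI.
apply: (le_trans (sqrt_sum_le _ _)); rewrite ReDip ImDip.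
have eB : n (B p.2) * n p.1 <= `|MB|.
  apply: (le_trans (ler_wpM2l (n_ge0 _) n1)); rewrite mulr1.
  apply: (le_trans (bnd_abs bB _)); rewrite -[X in _ <= X]mulr1.
  by apply: ler_wpM2l.
have eC : n (C p.1) * n p.2 <= `|MC|.
  apply: (le_trans (ler_wpM2l (n_ge0 _) n2)); rewrite mulr1.
  apply: (le_trans (bnd_abs bC _)); rewrite -[X in _ <= X]mulr1.
  by apply: ler_wpM2l.
have := rp_abs (B p.2) p.1; have := rp_abs (C p.1) p.2.
have := Im_abs (B p.2) p.1; have := Im_abs (C p.1) p.2.
rewrite -/(ipi _ _) -/(ipi _ _).
have := ler_normD (rp (B p.2) p.1) (rp (C p.1) p.2).
have := ler_normD (ipi (B p.2) p.1) (ipi (C p.1) p.2).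
lra.
Qed.

Definition w := sup W.
Lemma w_ge0 : 0 <= w.
Proof. apply: (sup_ge0' _ W_ub) => r [p [_ ->]]; rewrite ReNorm; exact: sqrtr_ge0. Qed.
Lemma w_unit p : ipnorm (prod_ip ip) p = 1 -> complex.Re `|prod_ip ip (T p) p| <= w.
Proof. by move=> hp; apply: (ub_le_sup W_ub); exists p. Qed.
Lemma BZ a x : B (a *: x) = a *: B x. Proof. exact: AZ. Qed.
Lemma CZ a x : C (a *: x) = a *: C x. Proof. exact: AZ. Qed.

Lemma part1_aux x u : n x = 1 -> n u = 1 ->
  2^-1 * (rp (B x) u + rp (Cs x) u) <= w /\ 2^-1 * (rp (B x) u - rp (Cs x) u) <= w.
Proof.
move=> hx hu.
set s := Num.sqrt (2^-1 : R).
have ss : s * s = 2^-1 by rewrite -expr2 sqr_sqrtr // invr_ge0.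
have Cx : rp (C u) x = rp (Cs x) u by rewrite aC rpC.
have rx : rp x x = 1 by rewrite -n_sqr hx expr1n.
have ru : rp u u = 1 by rewrite -n_sqr hu expr1n.
have h2 : 2^-1 + 2^-1 = 1 :> R by lra.
split.
- have hp : ipnorm (prod_ip ip) (s%:C *: u, s%:C *: x) = 1.
    rewrite /ipnorm /prod_ip /= -/(rp _ _) ReDip !rpZl !rpZr rx ru !mulr1 ss.
    by rewrite h2 sqrtr1.
  have h := w_unit hp; rewrite ReNorm in h.
  have := le_trans (sqrt_sum_geRe _ _) h.
  rewrite /T /opmatrix /prod_ip /= add0r addr0 BZ CZ ReDip !rpZl !rpZr Cx.
  by rewrite !mulrA ss mulrDr.
- have hp : ipnorm (prod_ip ip) (s%:C *: u, s%:C *: ('i *: x)) = 1.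
    rewrite /ipnorm /prod_ip /= -/(rp _ _) ReDip !rpZl !rpZr rpi rx ru !mulr1 ss.
    by rewrite h2 sqrtr1.
  have h := w_unit hp; rewrite ReNorm in h.
  have := le_trans (sqrt_sum_geIm _ _) h.
  rewrite /T /opmatrix /prod_ip /= add0r addr0 !BZ CZ ImDip !ipiZl !ipiZr ipi_il ipi_ir Cx.
  by rewrite !mulrA ss mulrN mulrBr.
Qed.
Lemma linD A A' : lin A -> lin A' -> lin (fun x => A x + A' x).
Proof. move=> h h' a x y; rewrite h h' scalerDr; by rewrite addrACA. Qed.
Lemma linB A A' : lin A -> lin A' -> lin (fun x => A x - A' x).
Proof. move=> h h' a x y; rewrite h h' scalerBr opprD; by rewrite addrACA. Qed.

Lemma ident p q r t : 2 * (rp p q + rp r t) = rp (p + r) (q + t) + rp (p - r) (q - t).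
Proof. rewrite !rpDl !rpDr !rpNl !rpNr; ring. Qed.

Variables (Bs' Cs' : H -> H) (MBs MCs : R).
Hypotheses (lBs : lin Bs) (lCs : lin Cs) (bBs : bnd Bs MBs) (bCs : bnd Cs MCs).

Let X := fun x => B x + Cs x.
Let Y := fun x => B x - Cs x.
Let X' := fun x => Bs x + C x.
Let Y' := fun x => Bs x - C x.

Lemma aBs z u : rp (Bs z) u = rp z (B u).
Proof. by rewrite rpC -aB rpC. Qed.
Lemma aCs z u : rp (Cs z) u = rp z (C u).
Proof. by rewrite rpC -aC rpC. Qed.

Lemma part1 : opnorm ip X <= 2 * w /\ opnorm ip Y <= 2 * w.
Proof.
have w0 := w_ge0.
have w2 : 0 <= 2 * w by rewrite mulr_ge0.
split; apply: op_le => // x hx; apply: pick => // u hu;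
  have [h1 h2] := part1_aux hx hu.
- by rewrite /X rpDl; lra.
- by rewrite /Y rpDl rpNl; lra.
Qed.

Lemma part2 : let a := opnorm ip X in let b := opnorm ip Y in
  opnorm ip (fun x => Bs (B x) + C (Cs x)) <= 2^-1 * (a ^+ 2 + b ^+ 2) /\
  opnorm ip (fun x => B (Bs x) + Cs (C x)) <= 2^-1 * (a ^+ 2 + b ^+ 2).
Proof.
move=> a b.
have lX : lin X by apply: linD.
have lY : lin Y by apply: linB.
have bX : bnd X (MB + MCs) by apply: bndD.
have bY : bnd Y (MB + MCs) by apply: bndB.
have a0 : 0 <= a := op_ge0 bX.
have b0 : 0 <= b := op_ge0 bY.
have K0 : 0 <= 2^-1 * (a ^+ 2 + b ^+ 2) by rewrite mulr_ge0 ?invr_ge0 ?addr_ge0 ?sqr_ge0.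
have key : forall p q r t, n p <= a -> n q <= a -> n r <= b -> n t <= b ->
    rp p q + rp r t <= a ^+ 2 + b ^+ 2.
  move=> p q r t hp hq hr ht.
  have e1 : rp p q <= a ^+ 2.
    by apply: (le_trans (CS _ _)); rewrite expr2; apply: ler_pM; rewrite ?n_ge0.
  have e2 : rp r t <= b ^+ 2.
    by apply: (le_trans (CS _ _)); rewrite expr2; apply: ler_pM; rewrite ?n_ge0.
  lra.
have hXu : forall u, n u = 1 -> n (X u) <= a.
  by move=> u hu; apply: op_unit bX hu.
have hYu : forall u, n u = 1 -> n (Y u) <= b.
  by move=> u hu; apply: op_unit bY hu.
have hX'u : forall u, n u = 1 -> n (X' u) <= a.
  move=> u hu; have := adj_norm lX bX (X' := X') _ u; rewrite hu mulr1; apply.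
  by move=> z y; rewrite /X /X' rpDl rpDr aB aCs.
have hY'u : forall u, n u = 1 -> n (Y' u) <= b.
  move=> u hu; have := adj_norm lY bY (X' := Y') _ u; rewrite hu mulr1; apply.
  by move=> z y; rewrite /Y /Y' rpDl rpNl rpDr rpNr aB aCs.
split; apply: op_le => // x hx; apply: pick => // u hu.
- rewrite rpDl aBs aC.
  have := ident (B x) (B u) (Cs x) (Cs u).
  have := key _ _ _ _ (hXu x hx) (hXu u hu) (hYu x hx) (hYu u hu).
  rewrite /X /Y; lra.
- rewrite rpDl aB aCs.
  have := ident (Bs x) (Bs u) (C x) (C u).
  have := key _ _ _ _ (hX'u x hx) (hX'u u hu) (hY'u x hx) (hY'u u hu).
  rewrite /X' /Y'; lra.
Qed.
End Ops.
End T.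
Section A.
Variable R : realType.
Lemma sq_le (x y : R) : 0 <= x -> 0 <= y -> x ^+ 2 <= y ^+ 2 -> x <= y.
Proof.
move=> hx hy h; rewrite -(ger0_norm hx) -(ger0_norm hy) -!sqrtr_sqr.
by rewrite ler_sqrt // sqr_ge0.
Qed.
Lemma arith (a b w p1 p2 : R) : 0 <= a -> 0 <= b -> 0 <= w -> a <= 2 * w -> b <= 2 * w ->
  p1 <= 2^-1 * (a ^+ 2 + b ^+ 2) -> p2 <= 2^-1 * (a ^+ 2 + b ^+ 2) ->
  (4 * Num.sqrt 2)^-1 * Num.sqrt (a ^+ 4 + b ^+ 4) <= w ^+ 2 /\
  4^-1 * Num.max p1 p2 <= (4 * Num.sqrt 2)^-1 * Num.sqrt (a ^+ 4 + b ^+ 4).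
Proof.
move=> a0 b0 w0 aw bw hp1 hp2.
set q := Num.sqrt (2 : R); set m := Num.sqrt (a ^+ 4 + b ^+ 4).
have q0 : 0 < q by rewrite sqrtr_gt0.
have q2 : q ^+ 2 = 2 by rewrite sqr_sqrtr.
have m0 : 0 <= m := sqrtr_ge0 _.
have m2 : m ^+ 2 = a ^+ 4 + b ^+ 4 by rewrite sqr_sqrtr // addr_ge0 // exprn_ge0.
have a2 : a ^+ 2 <= 4 * w ^+ 2.
  have : a * a <= (2 * w) * (2 * w) by apply: ler_pM.
  by rewrite -!expr2 exprMn; lra.
have b2 : b ^+ 2 <= 4 * w ^+ 2.
  have : b * b <= (2 * w) * (2 * w) by apply: ler_pM.
  by rewrite -!expr2 exprMn; lra.
have a4 : a ^+ 4 <= 16 * w ^+ 4.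
  have : a ^+ 2 * a ^+ 2 <= (4 * w ^+ 2) * (4 * w ^+ 2) by apply: ler_pM; rewrite ?sqr_ge0.
  by rewrite -!exprD mulrACA -exprD; lra.
have b4 : b ^+ 4 <= 16 * w ^+ 4.
  have : b ^+ 2 * b ^+ 2 <= (4 * w ^+ 2) * (4 * w ^+ 2) by apply: ler_pM; rewrite ?sqr_ge0.
  by rewrite -!exprD mulrACA -exprD; lra.
have hm : m <= 4 * q * w ^+ 2.
  apply: sq_le => //; first by rewrite mulr_ge0 ?sqr_ge0 // mulr_ge0 // ltW.
  rewrite m2 !exprMn q2 -exprD [4 ^+ 2]expr2; lra.
have iq : 0 <= (4 * q)^-1 by rewrite invr_ge0 mulr_ge0 // ltW.
have q0' : 4 * q != 0 by rewrite mulf_neq0 // gt_eqF.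
split.
  apply: (le_trans (ler_wpM2l iq hm)).
  by rewrite mulrA mulVf // mul1r.
have hs : q * (a ^+ 2 + b ^+ 2) <= 2 * m.
  apply: sq_le; first by rewrite mulr_ge0 ?addr_ge0 ?sqr_ge0 // ltW.
    by rewrite mulr_ge0.
  rewrite !exprMn q2 m2 sqrrD -!exprM.
  have := sqr_ge0 (a ^+ 2 - b ^+ 2); rewrite sqrrB -!exprM; lra.
have e : 4^-1 * (2^-1 * (a ^+ 2 + b ^+ 2)) = (4 * q)^-1 * (2^-1 * (q * (a ^+ 2 + b ^+ 2))).
  by field; rewrite gt_eqF.
have hmax : Num.max p1 p2 <= 2^-1 * (a ^+ 2 + b ^+ 2) by rewrite ge_max hp1 hp2.
apply: (le_trans (ler_wpM2l _ hmax)); first by rewrite invr_ge0.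
rewrite e; apply: ler_wpM2l => //; lra.
Qed.
End A.
Unset Implicit Arguments.
Local Open Scope ring_scope.
Local Open Scope complex_scope.

Theorem mainTheorem8 (R : realType) (H : lmodType R[i]) (ip : H -> H -> R[i])
  (hH : is_Hilbert ip) (B C Bs Cs : H -> H)
  (hB : is_bounded_linear ip B) (hC : is_bounded_linear ip C)
  (hBs : is_bounded_linear ip Bs) (hCs : is_bounded_linear ip Cs)
  (adjB : is_adjoint ip B Bs) (adjC : is_adjoint ip C Cs) :
  let w := numrad (prod_ip ip) (opmatrix (fun _ => 0) B C (fun _ => 0)) in
  let mid := (4 * Num.sqrt 2)^-1 *
      Num.sqrt (opnorm ip (fun x => B x + Cs x) ^+ 4
              + opnorm ip (fun x => B x - Cs x) ^+ 4) in
  w ^+ 2 >= mid /\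
  mid >= 4^-1 * Num.max (opnorm ip (fun x => Bs (B x) + C (Cs x)))
                        (opnorm ip (fun x => B (Bs x) + Cs (C x))).
Proof.
have [hip _] : is_inner_product ip /\ ip_complete ip := hH.
have [lB [MB bB]] : lin B /\ exists M, bnd ip B M := hB.
have [lC [MC bC]] : lin C /\ exists M, bnd ip C M := hC.
have [lBs [MBs bBs]] : lin Bs /\ exists M, bnd ip Bs M := hBs.
have [lCs [MCs bCs]] : lin Cs /\ exists M, bnd ip Cs M := hCs.
have aB : forall x y, rp ip (B x) y = rp ip x (Bs y) by move=> x y; rewrite /rp adjB.
have aC : forall x y, rp ip (C x) y = rp ip x (Cs y) by move=> x y; rewrite /rp adjC.
move=> w mid.
change w with (Pilot.Submission.w ip B C).
have [h1 h2] := part1 hip lB lC bB bC aC.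
have [h3 h4] := part2 hip lB bB aB aC lCs bCs.
have w0 := w_ge0 hip bB bC.
have a0 := op_ge0 (bndD hip bB bCs).
have b0 := op_ge0 (bndB hip bB bCs).
exact: arith a0 b0 w0 h1 h2 h3 h4.
Qed.
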